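(* The SRT$_{\mathsf{A}}$-definable transformations are closed under union, intersection, and composition. That is: for any linear group $\mathbf{G}$ and finite label sets $\Sigma,\Gamma,\Theta$, (i) if $\mathcal{S}_1,\mathcal{S}_2$ are $(\Sigma,\Gamma,\mathbf{G})$-SRT$_{\mathsf{A}}$, then $[\![\mathcal{S}_1]\!]\cup[\![\mathcal{S}_2]\!]$ and $[\![\mathcal{S}_1]\!]\cap[\![\mathcal{S}_2]\!]$ are each equal to $[\![\mathcal{S}]\!]$ for some $(\Sigma,\Gamma,\mathbf{G})$-SRT$_{\mathsf{A}}$ $\mathcal{S}$; (ii) if $\mathcal{S}_1$ is a $(\Sigma,\Gamma,\mathbf{G})$-SRT$_{\mathsf{A}}$ and $\mathcal{S}_2$ a $(\Gamma,\Theta,\mathbf{G})$-SRT$_{\mathsf{A}}$, then $[\![\mathcal{S}_1]\!]\cdot[\![\mathcal{S}_2]\!]=[\![\mathcal{S}]\!]$ for some $(\Sigma,\Theta,\mathbf{G})$-SRT$_{\mathsf{A}}$ $\mathcal{S}$.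
   Context: A linear group is a triple $\mathbf{G}=(D,\leq,+)$ where $D$ is an infinite set, $\leq$ is a total order on $D$, and $(D,+)$ is a group with identity $0$. For finite label sets $\Sigma$ (input) and $\Gamma$ (output), a $(\Sigma,\Gamma,\mathbf{G})$-streaming register transducer (SRT) is a tuple $\mathcal{S}=(Q,q_0,k,R_0,\Delta)$ where $Q$ is a finite set of states, $q_0\in Q$, $k\in\mathbb{N}$ is the number of registers, $R_0\in D^k$ gives the initial register values, and $\Delta\subseteq Q\times\Sigma\times\{>,=,<\}^k\times\{\mathsf{old},\mathsf{new},\mathsf{add}\}^k\times\{1,\dots,k\}\times\Gamma\times Q$ is a finite set of transitions. A transition $(q,\sigma,l,m,u,\gamma,q')$ enables the step $(q,R)\xrightarrow[(\gamma,d')]{(\sigma,d)}(q',R')$ between configurations ($q\in Q$, $R\in D^k$) iff (1) for every $i$, $d>R[i]$, $d=R[i]$ or $d<R[i]$ according as $l[i]$ is $>$, $=$ or $<$; (2) for every $i$, $R'[i]=R[i]$ if $m[i]=\mathsf{old}$, $R'[i]=d$ if $m[i]=\mathsf{new}$, $R'[i]=R[i]+d$ if $m[i]=\mathsf{add}$; (3) $d'=R'[u]$. A run over a finite data word $s\in(\Sigma\times D)^*$ of length $n$ generating $t\in(\Gamma\times D)^*$ is a sequence of $n$ steps from $(q_0,R_0)$, the $i$-th reading $s[i]$ and emitting $t[i]$, each enabled by a transition of $\Delta$. $s\otimes t$ is the word with $i$-th letter $(s[i],t[i])$, and $[\![\mathcal{S}]\!]=\{s\otimes t:\text{there is a run over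 }s\text{ generating }t\}$. An SRT is add-free (an SRT$_{\mathsf{A}}$) if every transition has update vector in $\{\mathsf{old},\mathsf{new}\}^k$. Composition: for $\mathcal{T}_1$ over $(\Sigma\times D)\times(\Gamma\times D)$ and $\mathcal{T}_2$ over $(\Gamma\times D)\times(\Theta\times D)$, $\mathcal{T}_1\cdot\mathcal{T}_2$ is the set of $s_1\otimes s_2$ ($s_1\in(\Sigma\times D)^*$, $s_2\in(\Theta\times D)^*$) such that some $s_3\in(\Gamma\times D)^*$ has $s_1\otimes s_3\in\mathcal{T}_1$ and $s_3\otimes s_2\in\mathcal{T}_2$. *)

(* Defs.v *)
From Stdlib Require List.
From mathcomp Require Import all_boot.
Set Implicit Arguments.
Unset Strict Implicit.
Unset Printing Implicit Defensive.

Record linear_group := LinearGroup {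
  lg_D :> Type;
  lg_le : lg_D -> lg_D -> Prop;
  lg_add : lg_D -> lg_D -> lg_D;
  lg_zero : lg_D;
  lg_opp : lg_D -> lg_D;
  lg_infinite : forall l : list lg_D, exists x, ~ List.In x l;
  lg_le_refl : forall x, lg_le x x;
  lg_le_antisym : forall x y, lg_le x y -> lg_le y x -> x = y;
  lg_le_trans : forall x y z, lg_le x y -> lg_le y z -> lg_le x z;
  lg_le_total : forall x y, lg_le x y \/ lg_le y x;
  lg_addA : forall x y z, lg_add x (lg_add y z) = lg_add (lg_add x y) z;
  lg_add0l : forall x, lg_add lg_zero x = x;
  lg_add0r : forall x, lg_add x lg_zero = x;
  lg_addNl : forall x, lg_add (lg_opp x) x = lg_zero;
  lg_addNr : forall x, lg_add x (lg_opp x) = lg_zero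
}.

Definition lg_lt (G : linear_group) (x y : G) : Prop := lg_le x y /\ x <> y.

Inductive cmp := CGt | CEq | CLt.
Inductive upd := UOld | UNew | UAdd.

Definition cmp_sem (G : linear_group) (c : cmp) (d r : G) : Prop :=
  match c with
  | CGt => lg_lt r d
  | CEq => d = r
  | CLt => lg_lt d r
  end.

Definition upd_sem (G : linear_group) (m : upd) (r d : G) : G :=
  match m with
  | UOld => r
  | UNew => d
  | UAdd => lg_add r d
  end.

Record transition (Sigma Gamma Q : Type) (k : nat) := Transition {
  tr_src : Q;
  tr_in : Sigma;
  tr_test : 'I_k -> cmp;
  tr_upd : 'I_k -> upd;
  tr_out : 'I_k;
  tr_lab : Gamma;
  tr_dst : Q
}.

(* A (Sigma, Gamma, G)-streaming register transducer. Delta is a finite set,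
   given as a list. *)
Record srt (Sigma Gamma : finType) (G : linear_group) := SRT {
  srt_Q : finType;
  srt_q0 : srt_Q;
  srt_k : nat;
  srt_R0 : 'I_srt_k -> lg_D G;
  srt_Delta : list (transition Sigma Gamma srt_Q srt_k)
}.

Definition enables (Sigma Gamma : finType) (G : linear_group) (Q : Type) (k : nat)
    (tr : transition Sigma Gamma Q k) (q : Q) (R : 'I_k -> lg_D G)
    (sigma : Sigma) (d : lg_D G) (gamma : Gamma) (d' : lg_D G)
    (q' : Q) (R' : 'I_k -> lg_D G) : Prop :=
  [/\ tr_src tr = q, tr_in tr = sigma, tr_lab tr = gamma, tr_dst tr = q'
    & [/\ forall i, cmp_sem (tr_test tr i) d (R i),
          forall i, R' i = upd_sem (tr_upd tr i) (R i) d
        & d' = R' (tr_out tr)]].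

(* Words of (Sigma x D) x (Gamma x D): the i-th letter is (s[i], t[i]),
   i.e. this represents s (x) t. *)
Definition transformation (Sigma Gamma : Type) (G : linear_group) :=
  seq ((Sigma * lg_D G) * (Gamma * lg_D G)) -> Prop.

Fixpoint runs_from (Sigma Gamma : finType) (G : linear_group) (S : srt Sigma Gamma G)
    (q : srt_Q S) (R : 'I_(srt_k S) -> lg_D G)
    (w : seq ((Sigma * lg_D G) * (Gamma * lg_D G))) : Prop :=
  match w with
  | [::] => True
  | ((sigma, d), (gamma, d')) :: w' =>
      exists tr, List.In tr (srt_Delta S) /\
        exists q' R', enables tr q R sigma d gamma d' q' R' /\ @runs_from Sigma Gamma G S q' R' w'
  end.

Definition semantics (Sigma Gamma : finType) (G : linear_group) (S : srt Sigma Gamma G)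
  : transformation Sigma Gamma G :=
  fun w => @runs_from Sigma Gamma G S (srt_q0 S) (@srt_R0 _ _ _ S) w.

Definition add_free (Sigma Gamma : finType) (G : linear_group) (S : srt Sigma Gamma G) : Prop :=
  forall tr, List.In tr (srt_Delta S) -> forall i, tr_upd tr i <> UAdd.

Definition compose (Sigma Gamma Theta : Type) (G : linear_group)
    (T1 : transformation Sigma Gamma G) (T2 : transformation Gamma Theta G)
  : transformation Sigma Theta G :=
  fun w => exists (s1 : seq (Sigma * lg_D G)) (s2 : seq (Theta * lg_D G))
                  (s3 : seq (Gamma * lg_D G)),
    [/\ size s1 = size s3, size s3 = size s2, w = zip s1 s2,
        T1 (zip s1 s3) & T2 (zip s3 s2)].

(* Main.v *)
From HB Require Import structures.
Require Import Defs.
From mathcomp Require Import all_boot.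
From Stdlib Require Import Classical.
From Stdlib Require List.
From mathcomp Require Import zify.
Set Implicit Arguments.
Unset Strict Implicit.
Unset Printing Implicit Defensive.

Definition c2o (c : cmp) : 'I_3 := match c with CGt => @Ordinal 3 0 isT | CEq => @Ordinal 3 1 isT | CLt => @Ordinal 3 2 isT end.
Definition o2c (o : 'I_3) : cmp := match val o with 0 => CGt | 1 => CEq | _ => CLt end.
Lemma c2oK : cancel c2o o2c. Proof. by case. Qed.
HB.instance Definition _ := Finite.copy cmp (can_type c2oK).

Lemma cmp_uniq (G : linear_group) (a b : cmp) (x y : G) :
  cmp_sem a x y -> cmp_sem b x y -> a = b.
Proof.
have AS := @lg_le_antisym G.
case: a; case: b => //=; rewrite /lg_lt;
 try (move=> [h1 h2] [h3 h4]; by case: h2; apply: AS);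
 try (move=> [h1 h2] e; by subst);
 try (move=> e [h1 h2]; by subst).
Qed.

Lemma cmp_ex (G : linear_group) (x y : G) : exists c, cmp_sem c x y.
Proof.
case: (classic (x = y)) => [e|ne]; first by exists CEq.
case: (lg_le_total x y) => h.
  by exists CLt; split.
by exists CGt; split => // e; apply: ne.
Qed.

Definition flip (c : cmp) := match c with CGt => CLt | CEq => CEq | CLt => CGt end.
Lemma cmp_flip (G : linear_group) c (x y : G) : cmp_sem c x y -> cmp_sem (flip c) y x.
Proof. by case: c => //=. Qed.

Lemma cmp_eq (G : linear_group) c (x y : G) : cmp_sem c x y -> (x = y <-> c = CEq).
Proof.
move=> h; split; last by move=> e; subst.
move=> e; subst; apply: (cmp_uniq h); done.
Qed.

Lemma runs_from_ext (Sigma Gamma : finType) (G : linear_group) (S : srt Sigma Gamma G)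
  q (R R' : 'I_(srt_k S) -> G) w :
  (forall i, R i = R' i) -> runs_from q R w <-> runs_from q R' w.
Proof.
move=> e; case: w => [|[[s d] [g d']] w] //=.
have E : forall tr q1 R1, enables tr q R s d g d' q1 R1 <-> enables tr q R' s d g d' q1 R1.
  move=> tr q1 R1; rewrite /enables; split; case=> h1 h2 h3 h4 [h5 h6 h7];
    split=> //; split=> // i.
  - by rewrite -e.
  - by rewrite -e.
  - by rewrite e.
  - by rewrite e.
split; case=> tr [Hin [q1 [R1 [H1 H2]]]]; exists tr; split=> //; exists q1, R1; split=> //; by apply/E.
Qed.

Lemma In_mem (T : eqType) (s : seq T) x : x \in s -> List.In x s.
Proof.
elim: s => [|a s IH] //.
rewrite in_cons => /orP [/eqP ->|h]; [left|right; apply: IH] => //.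
Qed.

Lemma In_enum (T : finType) (x : T) : List.In x (enum T).
Proof. by apply: In_mem; rewrite mem_enum. Qed.

Definition updV (G : linear_group) N (V : 'I_N -> G) (f : 'I_N) (d : G) : 'I_N -> G :=
  fun s => if s == f then d else V s.

Definition mkTr (Sigma Gamma C : Type) N (fresh : C -> 'I_N) (c : C) (s : Sigma)
  (l : {ffun 'I_N -> cmp}) (x : Gamma * 'I_N * C) : transition Sigma Gamma C N :=
  Transition c s (fun i => l i) (fun i => if i == fresh c then UNew else UOld) x.1.2 x.1.1 x.2.

Definition build (Sigma Gamma : finType) (G : linear_group) (C : finType) (c0 : C) N
  (V0 : 'I_N -> G) (fresh : C -> 'I_N)
  (step : C -> Sigma -> {ffun 'I_N -> cmp} -> list (Gamma * 'I_N * C)) : srt Sigma Gamma G :=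
  @SRT Sigma Gamma G C c0 N V0
   (List.flat_map (fun c => List.flat_map (fun s => List.flat_map (fun l => List.map (mkTr fresh c s l) (step c s l))
       (enum {ffun 'I_N -> cmp})) (enum Sigma)) (enum C)).

Lemma build_add_free (Sigma Gamma : finType) (G : linear_group) (C : finType) (c0 : C) N
  (V0 : 'I_N -> G) (fresh : C -> 'I_N)
  (step : C -> Sigma -> {ffun 'I_N -> cmp} -> list (Gamma * 'I_N * C)) :
  add_free (build c0 V0 fresh step).
Proof.
move=> tr /=; case/List.in_flat_map => c [_ /List.in_flat_map [s [_ /List.in_flat_map [l [_ /List.in_map_iff [x [<- _]]]]]]] i /=.
by case: (i == fresh c).
Qed.

Fixpoint grun (Sigma Gamma : finType) (G : linear_group) (C : finType) N
  (fresh : C -> 'I_N) (step : C -> Sigma -> {ffun 'I_N -> cmp} -> list (Gamma * 'I_N * C))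
  (c : C) (V : 'I_N -> G) (w : seq ((Sigma * G) * (Gamma * G))) : Prop :=
  match w with
  | [::] => True
  | ((s, d), (g, d')) :: w' =>
     exists l : {ffun 'I_N -> cmp}, (forall i, cmp_sem (l i) d (V i)) /\
     exists u c', List.In (g, u, c') (step c s l) /\ d' = updV V (fresh c) d u /\
       grun fresh step c' (updV V (fresh c) d) w'
  end.

Lemma build_runs (Sigma Gamma : finType) (G : linear_group) (C : finType) (c0 : C) N
  (V0 : 'I_N -> G) (fresh : C -> 'I_N)
  (step : C -> Sigma -> {ffun 'I_N -> cmp} -> list (Gamma * 'I_N * C)) w : forall c V,
  @runs_from _ _ _ (build c0 V0 fresh step) c V w <-> grun fresh step c V w.
Proof.
elim: w => [|[[s d] [g d']] w IH] c V //=.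
split.
- case=> tr [/List.in_flat_map [c1 [_ /List.in_flat_map [s1 [_ /List.in_flat_map [l [_ /List.in_map_iff [x [E Hx]]]]]]]]].
  move=> [q' [R' [[h1 h2 h3 h4 [h5 h6 h7]] Hr]]].
  subst tr; move: h1 h2 h3 h4 h5 h6 h7 => /= h1 h2 h3 h4 h5 h6 h7; subst.
  exists l; split => //.
  have ER : forall i, R' i = updV V (fresh c) d i.
    by move=> i; rewrite h6 /updV; case: (i == fresh c).
  exists x.1.2, x.2; split; first by move: Hx; case: (x) => [[]].
  split; first by rewrite ER.
  apply/IH; subst; exact: (proj1 (@runs_from_ext _ _ _ (build c0 V0 fresh step) x.2 R' (updV V (fresh c) d) w ER) Hr).
- case=> l [Hl [u [c' [Hin [Hd Hr]]]]].
  exists (mkTr fresh c s l (g, u, c')); split.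
    apply/List.in_flat_map; exists c; split; first exact: In_enum.
    apply/List.in_flat_map; exists s; split; first exact: In_enum.
    apply/List.in_flat_map; exists l; split; first exact: In_enum.
    by apply/List.in_map_iff; exists (g, u, c').
  exists c', (updV V (fresh c) d); split; last by apply/IH.
  split => //=; split => // i; rewrite /updV; by case: (i == fresh c).
Qed.

Definition freshp k1 k2 N (p1 : {ffun 'I_k1 -> 'I_N.+1}) (p2 : {ffun 'I_k2 -> 'I_N.+1}) : 'I_N.+1 :=
  odflt ord0 [pick s | (s \notin codom p1) && (s \notin codom p2)].

Lemma freshp_ok k1 k2 N (p1 : {ffun 'I_k1 -> 'I_N.+1}) (p2 : {ffun 'I_k2 -> 'I_N.+1}) :
  k1 + k2 <= N -> (forall i, p1 i != freshp p1 p2) /\ (forall j, p2 j != freshp p1 p2).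
Proof.
move=> hk; rewrite /freshp; case: pickP => [s /andP [h1 h2]|none] /=.
  split => i; apply/eqP => e; [move: h1|move: h2]; by rewrite -e codom_f.
exfalso.
have : #|'I_N.+1| <= #|codom p1 ++ codom p2|.
  apply: subset_leq_card; apply/subsetP => s _.
  move: (none s); rewrite mem_cat; by case: (s \in codom p1); case: (s \in codom p2).
rewrite card_ord => h; move: (leq_trans h (card_size _)).
rewrite size_cat !size_codom !card_ord => h'.
by move: (leq_ltn_trans hk h'); rewrite ltnn.
Qed.

Definition ocorrect (G : linear_group) N (o : {ffun 'I_N * 'I_N -> cmp}) (V : 'I_N -> G) :=
  forall a b, cmp_sem (o (a, b)) (V a) (V b).

Definition newo N (o : {ffun 'I_N * 'I_N -> cmp}) (f : 'I_N) (l : {ffun 'I_N -> cmp})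
  : {ffun 'I_N * 'I_N -> cmp} :=
  [ffun ab => if ab.1 == f then (if ab.2 == f then CEq else l ab.2)
              else if ab.2 == f then flip (l ab.1) else o ab].

Lemma newo_ok (G : linear_group) N o (V : 'I_N -> G) f (l : {ffun 'I_N -> cmp}) d :
  ocorrect o V -> (forall s, cmp_sem (l s) d (V s)) -> ocorrect (newo o f l) (updV V f d).
Proof.
move=> ho hl a b; rewrite /newo ffunE /updV /=.
case: (a == f); case: (b == f) => //.
exact: cmp_flip.
Qed.

Definition newp (Sigma Gamma Q : Type) k N (t : transition Sigma Gamma Q k)
  (p : {ffun 'I_k -> 'I_N}) (g : 'I_N) : {ffun 'I_k -> 'I_N} :=
  [ffun i => if tr_upd t i is UNew then g else p i].

Lemma sim (Sigma Gamma Q : finType) (G : linear_group) k N (t : transition Sigma Gamma Q k)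
  (V V' : 'I_N -> G) (p : {ffun 'I_k -> 'I_N}) (g : 'I_N) (e : G) (m : 'I_N -> cmp)
  q s y d' q' (R' : 'I_k -> G) :
  (forall i, tr_upd t i <> UAdd) -> V' g = e -> (forall i, V' (p i) = V (p i)) ->
  (forall i, cmp_sem (m (p i)) e (V (p i))) ->
  (enables t q (fun i => V (p i)) s e y d' q' R' <->
  [/\ tr_src t = q, tr_in t = s, tr_lab t = y, tr_dst t = q' &
      [/\ (forall i, tr_test t i = m (p i)), (forall i, R' i = V' (newp t p g i))
        & d' = V' (newp t p g (tr_out t))]]).
Proof.
move=> hA hg hp hm.
have HR : forall i, upd_sem (tr_upd t i) (V (p i)) e = V' (newp t p g i).
  move=> i; rewrite /newp ffunE; move: (hA i); case: (tr_upd t i) => //= _; by rewrite ?hg ?hp.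
rewrite /enables; split.
- case=> h1 h2 h3 h4 [h5 h6 h7]; split=> //; split.
  + move=> i; exact: (cmp_uniq (h5 i) (hm i)).
  + by move=> i; rewrite h6 HR.
  + by rewrite h7 h6 HR.
- case=> h1 h2 h3 h4 [h5 h6 h7]; split=> //; split.
  + by move=> i; rewrite h5.
  + by move=> i; rewrite h6 HR.
  + by rewrite h7 h6.
Qed.

Arguments sim {Sigma Gamma Q G k N t V V' p g e m q s y d' q' R'}.

Lemma ex_l (G : linear_group) N (V : 'I_N -> G) d :
  exists l : {ffun 'I_N -> cmp}, forall s, cmp_sem (l s) d (V s).
Proof.
have [f hf] := fin_all_exists (fun s : 'I_N => cmp_ex d (V s)).
by exists [ffun s => f s] => s; rewrite ffunE.
Qed.

Definition compR (Sigma Gamma Theta : finType) (G : linear_group)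
  (S1 : srt Sigma Gamma G) (S2 : srt Gamma Theta G) q1 R1 q2 R2
  (w : seq ((Sigma * G) * (Theta * G))) : Prop :=
  exists (s1 : seq (Sigma * G)) (s2 : seq (Theta * G)) (s3 : seq (Gamma * G)),
    [/\ size s1 = size s3, size s3 = size s2, w = zip s1 s2,
        @runs_from _ _ _ S1 q1 R1 (zip s1 s3) & @runs_from _ _ _ S2 q2 R2 (zip s3 s2)].
Arguments compR {Sigma Gamma Theta G} S1 S2 q1 R1 q2 R2 w.

Lemma compR_cons (Sigma Gamma Theta : finType) (G : linear_group)
  (S1 : srt Sigma Gamma G) (S2 : srt Gamma Theta G) q1 R1 q2 R2 s d th d' w :
  compR S1 S2 q1 R1 q2 R2 (((s, d), (th, d')) :: w) <->
  exists y d3, exists t1, List.In t1 (srt_Delta S1) /\ exists q1' R1',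
    enables t1 q1 R1 s d y d3 q1' R1' /\ exists t2, List.In t2 (srt_Delta S2) /\
    exists q2' R2', enables t2 q2 R2 y d3 th d' q2' R2' /\ compR S1 S2 q1' R1' q2' R2' w.
Proof.
split.
- case=> s1 [s2 [s3 [e1 e2 e3 r1 r2]]].
  case: s1 e1 e3 r1 => [|a1 s1] //=; first by move=> _; case: s2 {e2 r2}.
  case: s3 e2 r2 => [|[y d3] s3] //= e2 r2 [e1].
  case: s2 e2 r2 => [|a2 s2] //= [e2] r2 [E1 E2 E3].
  subst a1 a2 w.
  move=> [t1 [H1 [q1' [R1' [En1 r1]]]]].
  move: r2 => [t2 [H2 [q2' [R2' [En2 r2]]]]].
  exists y, d3, t1; split=> //; exists q1', R1'; split=> //; exists t2; split=> //.
  exists q2', R2'; split=> //; by exists s1, s2, s3.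
- case=> y [d3 [t1 [H1 [q1' [R1' [En1 [t2 [H2 [q2' [R2' [En2 [s1 [s2 [s3 [e1 e2 e3 r1 r2]]]]]]]]]]]]]]].
  exists ((s, d) :: s1), ((th, d') :: s2), ((y, d3) :: s3); split => /=; try by rewrite ?e1 ?e2 ?e3.
  + by exists t1; split=> //; exists q1', R1'.
  + by exists t2; split=> //; exists q2', R2'.
Qed.

Lemma compR_ext (Sigma Gamma Theta : finType) (G : linear_group)
  (S1 : srt Sigma Gamma G) (S2 : srt Gamma Theta G) q1 R1 R1' q2 R2 R2' w :
  (forall i, R1 i = R1' i) -> (forall j, R2 j = R2' j) ->
  compR S1 S2 q1 R1 q2 R2 w -> compR S1 S2 q1 R1' q2 R2' w.
Proof.
move=> h1 h2 [s1 [s2 [s3 [e1 e2 e3 r1 r2]]]]; exists s1, s2, s3; split=> //.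
  exact: (proj1 (runs_from_ext _ _ h1)).
exact: (proj1 (runs_from_ext _ _ h2)).
Qed.

Definition freshc (A B : Type) k1 k2 N
  (c : A * B * {ffun 'I_k1 -> 'I_N.+1} * {ffun 'I_k2 -> 'I_N.+1} * {ffun 'I_N.+1 * 'I_N.+1 -> cmp})
  : 'I_N.+1 := freshp c.1.1.2 c.1.2.

Definition comp_step (Sigma Gamma Theta : finType) (G : linear_group)
  (S1 : srt Sigma Gamma G) (S2 : srt Gamma Theta G) N
  (c : srt_Q S1 * srt_Q S2 * {ffun 'I_(srt_k S1) -> 'I_N.+1} * {ffun 'I_(srt_k S2) -> 'I_N.+1}
        * {ffun 'I_N.+1 * 'I_N.+1 -> cmp})
  (s : Sigma) (l : {ffun 'I_N.+1 -> cmp}) :=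
  let: (q1, q2, p1, p2, o) := c in
  let f := freshp p1 p2 in
  let o' := newo o f l in
  List.flat_map (fun t1 => let p1' := newp t1 p1 f in let s3 := p1' (tr_out t1) in
    List.flat_map (fun t2 => let p2' := newp t2 p2 s3 in
      if [&& tr_src t1 == q1, tr_in t1 == s, [forall i, tr_test t1 i == l (p1 i)],
             tr_src t2 == q2, tr_in t2 == tr_lab t1 & [forall j, tr_test t2 j == o' (s3, p2 j)]]
      then [:: (tr_lab t2, p2' (tr_out t2), (tr_dst t1, tr_dst t2, p1', p2', o'))] else [::])
    (srt_Delta S2)) (srt_Delta S1).

Lemma comp_sim (Sigma Gamma Theta : finType) (G : linear_group)
  (S1 : srt Sigma Gamma G) (S2 : srt Gamma Theta G) N :
  add_free S1 -> add_free S2 -> srt_k S1 + srt_k S2 <= N ->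
  forall w c (V : 'I_N.+1 -> G), ocorrect c.2 V ->
  (grun (@freshc _ _ _ _ _) (@comp_step _ _ _ _ S1 S2 N) c V w <->
   compR S1 S2 c.1.1.1.1 (fun i => V (c.1.1.2 i)) c.1.1.1.2 (fun j => V (c.1.2 j)) w).
Proof.
move=> A1 A2 hk w; elim: w => [|[[s d] [th d']] w IH] c V.
  move=> _ /=; split=> // _; by exists [::], [::], [::].
case: c => [[[[q1 q2] p1] p2] o] /= ho.
have [F1 F2] := freshp_ok p1 p2 hk.
set f := freshp p1 p2.
have HV1 : forall i, updV V f d (p1 i) = V (p1 i).
  by move=> i; rewrite /updV (negbTE (F1 i)).
have HV2 : forall i, updV V f d (p2 i) = V (p2 i).
  by move=> i; rewrite /updV (negbTE (F2 i)).
rewrite compR_cons; split.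
- case=> l [Hl [u [c' [Hin [Hd Hr]]]]].
  move: Hin; rewrite /comp_step /freshc /= -/f.
  case/List.in_flat_map => t1 [Ht1 /List.in_flat_map [t2 [Ht2]]].
  case: ifP => // /andP [/eqP e1 /and5P [/eqP e2 /forallP T1 /eqP e4 /eqP e5 /forallP T2]] [] // [Eth Eu Ec].
  subst c' th u.
  have ho' := newo_ok f ho Hl.
  move: Hr => /IH /= => /(_ ho') Hr.
  have hg1 : updV V f d f = d by rewrite /updV eqxx.
  have hm1 : forall i, cmp_sem (l (p1 i)) d (V (p1 i)) := fun i => Hl (p1 i).
  set s3 := newp t1 p1 f (tr_out t1).
  have hg2 : updV V f d s3 = updV V f d s3 by [].
  have hm2 : forall j, cmp_sem (newo o f l (s3, p2 j)) (updV V f d s3) (V (p2 j)).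
    by move=> j; rewrite -HV2; apply: ho'.
  exists (tr_lab t1), (updV V f d s3), t1; split => //.
  exists (tr_dst t1), (fun i => updV V f d (newp t1 p1 f i)); split.
    apply/(sim (A1 t1 Ht1) hg1 HV1 hm1).
    by split=> //; split=> // i; apply/eqP.
  exists t2; split => //.
  exists (tr_dst t2), (fun i => updV V f d (newp t2 p2 s3 i)); split => //.
  apply/(sim (m := fun x => newo o f l (s3, x)) (A2 t2 Ht2) hg2 HV2 hm2).
  by split=> //; split=> // i; apply/eqP.
- case=> y [d3 [t1 [Ht1 [q1' [R1' [En1 [t2 [Ht2 [q2' [R2' [En2 Hr]]]]]]]]]]].
  have [l Hl] := ex_l V d.
  have ho' := newo_ok f ho Hl.
  have hg1 : updV V f d f = d by rewrite /updV eqxx.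
  have hm1 : forall i, cmp_sem (l (p1 i)) d (V (p1 i)) := fun i => Hl (p1 i).
  case: ((sim (A1 t1 Ht1) hg1 HV1 hm1).1 En1) => e1 e2 e3 e4 [T1 ER1 Ed3]; subst d3 q1' y.
  set s3 := newp t1 p1 f (tr_out t1).
  have hg2 : updV V f d s3 = updV V f d s3 by [].
  have hm2 : forall j, cmp_sem (newo o f l (s3, p2 j)) (updV V f d s3) (V (p2 j)).
    by move=> j; rewrite -HV2; apply: ho'.
  case: ((sim (m := fun x => newo o f l (s3, x)) (A2 t2 Ht2) hg2 HV2 hm2).1 En2) => e1' e2' e3' e4' [T2 ER2 Ed']; subst q2' th d'.
  exists l; split => //.
  exists (newp t2 p2 s3 (tr_out t2)), (tr_dst t1, tr_dst t2, newp t1 p1 f, newp t2 p2 s3, newo o f l).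
  split; last split => //.
    rewrite /comp_step /= -/f.
    apply/List.in_flat_map; exists t1; split => //.
    apply/List.in_flat_map; exists t2; split => //.
    rewrite -/s3.
    have -> : [&& tr_src t1 == q1, tr_in t1 == s, [forall i, tr_test t1 i == l (p1 i)],
             tr_src t2 == q2, tr_in t2 == tr_lab t1 & [forall j, tr_test t2 j == newo o f l (s3, p2 j)]].
      rewrite e1 e2 e1' e2' !eqxx /=.
      by apply/andP; split; apply/forallP => i; apply/eqP.
    by left.
  apply/IH => //=.
  apply: (compR_ext _ _ Hr) => i; by rewrite ?ER1 ?ER2.
Qed.

Definition inter_step (Sigma Gamma : finType) (G : linear_group)
  (S1 S2 : srt Sigma Gamma G) N
  (c : srt_Q S1 * srt_Q S2 * {ffun 'I_(srt_k S1) -> 'I_N.+1} * {ffun 'I_(srt_k S2) -> 'I_N.+1}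
        * {ffun 'I_N.+1 * 'I_N.+1 -> cmp})
  (s : Sigma) (l : {ffun 'I_N.+1 -> cmp}) :=
  let: (q1, q2, p1, p2, o) := c in
  let f := freshp p1 p2 in
  let o' := newo o f l in
  List.flat_map (fun t1 => let p1' := newp t1 p1 f in
    List.flat_map (fun t2 => let p2' := newp t2 p2 f in
      if [&& [&& tr_src t1 == q1, tr_in t1 == s & [forall i, tr_test t1 i == l (p1 i)]],
             [&& tr_src t2 == q2, tr_in t2 == s & [forall j, tr_test t2 j == l (p2 j)]],
             tr_lab t1 == tr_lab t2 & o' (p1' (tr_out t1), p2' (tr_out t2)) == CEq]
      then [:: (tr_lab t1, p1' (tr_out t1), (tr_dst t1, tr_dst t2, p1', p2', o'))] else [::])
    (srt_Delta S2)) (srt_Delta S1).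

Lemma inter_sim (Sigma Gamma : finType) (G : linear_group)
  (S1 S2 : srt Sigma Gamma G) N :
  add_free S1 -> add_free S2 -> srt_k S1 + srt_k S2 <= N ->
  forall w c (V : 'I_N.+1 -> G), ocorrect c.2 V ->
  (grun (@freshc _ _ _ _ _) (@inter_step _ _ _ S1 S2 N) c V w <->
   runs_from c.1.1.1.1 (fun i => V (c.1.1.2 i)) w /\ runs_from c.1.1.1.2 (fun j => V (c.1.2 j)) w).
Proof.
move=> A1 A2 hk w; elim: w => [|[[s d] [th d']] w IH] c V //.
case: c => [[[[q1 q2] p1] p2] o] /= ho.
have [F1 F2] := freshp_ok p1 p2 hk.
set f := freshp p1 p2.
have HV1 : forall i, updV V f d (p1 i) = V (p1 i).
  by move=> i; rewrite /updV (negbTE (F1 i)).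
have HV2 : forall i, updV V f d (p2 i) = V (p2 i).
  by move=> i; rewrite /updV (negbTE (F2 i)).
have hg1 : updV V f d f = d by rewrite /updV eqxx.
split.
- case=> l [Hl [u [c' [Hin [Hd Hr]]]]].
  move: Hin; rewrite /inter_step /freshc /= -/f.
  case/List.in_flat_map => t1 [Ht1 /List.in_flat_map [t2 [Ht2]]].
  case: ifP => // /and4P [/and3P [/eqP e1 /eqP e2 /forallP T1] /and3P [/eqP e1' /eqP e2' /forallP T2]
     /eqP El /eqP Eo] [] // [Eth Eu Ec].
  subst c' th u.
  have ho' := newo_ok f ho Hl.
  move: Hr => /IH /= => /(_ ho') [Hr1 Hr2].
  have hm1 : forall i, cmp_sem (l (p1 i)) d (V (p1 i)) := fun i => Hl (p1 i).
  have hm2 : forall i, cmp_sem (l (p2 i)) d (V (p2 i)) := fun i => Hl (p2 i).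
  split.
    exists t1; split => //.
    exists (tr_dst t1), (fun i => updV V f d (newp t1 p1 f i)); split => //.
    apply/(sim (A1 t1 Ht1) hg1 HV1 hm1).
    by split=> //; split=> // i; apply/eqP.
  exists t2; split => //.
  exists (tr_dst t2), (fun i => updV V f d (newp t2 p2 f i)); split => //.
  apply/(sim (A2 t2 Ht2) hg1 HV2 hm2).
  split=> //; split=> //; first by move=> i; apply/eqP.
  rewrite Hd; apply/(cmp_eq (ho' _ _)); exact: Eo.
- case=> [[t1 [Ht1 [q1' [R1' [En1 Hr1]]]]] [t2 [Ht2 [q2' [R2' [En2 Hr2]]]]]].
  have [l Hl] := ex_l V d.
  have ho' := newo_ok f ho Hl.
  have hm1 : forall i, cmp_sem (l (p1 i)) d (V (p1 i)) := fun i => Hl (p1 i).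
  have hm2 : forall i, cmp_sem (l (p2 i)) d (V (p2 i)) := fun i => Hl (p2 i).
  case: ((sim (A1 t1 Ht1) hg1 HV1 hm1).1 En1) => e1 e2 e3 e4 [T1 ER1 Ed1]; subst q1'.
  case: ((sim (A2 t2 Ht2) hg1 HV2 hm2).1 En2) => e1' e2' e3' e4' [T2 ER2 Ed2]; subst q2'.
  exists l; split => //.
  exists (newp t1 p1 f (tr_out t1)), (tr_dst t1, tr_dst t2, newp t1 p1 f, newp t2 p2 f, newo o f l).
  split; last split => //.
    rewrite /inter_step /= -/f.
    apply/List.in_flat_map; exists t1; split => //.
    apply/List.in_flat_map; exists t2; split => //.
    have -> : [&& [&& tr_src t1 == q1, tr_in t1 == s & [forall i, tr_test t1 i == l (p1 i)]],
             [&& tr_src t2 == q2, tr_in t2 == s & [forall j, tr_test t2 j == l (p2 j)]],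
             tr_lab t1 == tr_lab t2 &
             newo o f l (newp t1 p1 f (tr_out t1), newp t2 p2 f (tr_out t2)) == CEq].
      rewrite e1 e2 e1' e2' e3 e3' !eqxx /=.
      apply/andP; split; first by apply/forallP => i; apply/eqP.
      apply/andP; split; first by apply/forallP => i; apply/eqP.
      apply/eqP; apply/(cmp_eq (ho' _ _)); by rewrite -Ed1 -Ed2.
    by rewrite e3; left.
  apply/IH => //=; split.
    exact: (proj1 (runs_from_ext _ _ ER1) Hr1).
  exact: (proj1 (runs_from_ext _ _ ER2) Hr2).
Qed.

Definition union_step (Sigma Gamma : finType) (G : linear_group)
  (S1 S2 : srt Sigma Gamma G) N
  (c : option (srt_Q S1) * option (srt_Q S2) * {ffun 'I_(srt_k S1) -> 'I_N.+1}
        * {ffun 'I_(srt_k S2) -> 'I_N.+1} * {ffun 'I_N.+1 * 'I_N.+1 -> cmp})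
  (s : Sigma) (l : {ffun 'I_N.+1 -> cmp}) :=
  let: (oq1, oq2, p1, p2, o) := c in
  let f := freshp p1 p2 in
  let o' := newo o f l in
  List.flat_map (fun t1 => let p1' := newp t1 p1 f in
      if [&& Some (tr_src t1) == oq1, tr_in t1 == s & [forall i, tr_test t1 i == l (p1 i)]]
      then [:: (tr_lab t1, p1' (tr_out t1), (Some (tr_dst t1), None, p1', p2, o'))] else [::])
    (srt_Delta S1) ++
  List.flat_map (fun t2 => let p2' := newp t2 p2 f in
      if [&& Some (tr_src t2) == oq2, tr_in t2 == s & [forall i, tr_test t2 i == l (p2 i)]]
      then [:: (tr_lab t2, p2' (tr_out t2), (None, Some (tr_dst t2), p1, p2', o'))] else [::])
    (srt_Delta S2).

Definition uR (Sigma Gamma : finType) (G : linear_group) (S1 S2 : srt Sigma Gamma G)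
  (oq1 : option (srt_Q S1)) R1 (oq2 : option (srt_Q S2)) R2 w :=
  (exists q1, oq1 = Some q1 /\ runs_from q1 R1 w) \/ (exists q2, oq2 = Some q2 /\ runs_from q2 R2 w).

Lemma union_sim (Sigma Gamma : finType) (G : linear_group)
  (S1 S2 : srt Sigma Gamma G) N :
  add_free S1 -> add_free S2 -> srt_k S1 + srt_k S2 <= N ->
  forall w c (V : 'I_N.+1 -> G), ocorrect c.2 V -> (c.1.1.1.1 <> None \/ c.1.1.1.2 <> None) ->
  (grun (@freshc _ _ _ _ _) (@union_step _ _ _ S1 S2 N) c V w <->
   uR c.1.1.1.1 (fun i => V (c.1.1.2 i)) c.1.1.1.2 (fun j => V (c.1.2 j)) w).
Proof.
move=> A1 A2 hk w; elim: w => [|[[s d] [th d']] w IH] c V.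
  move=> _; case: c => [[[[oq1 oq2] p1] p2] o] /= H; rewrite /uR; split => // _.
  case: oq1 H => [q1|] H; first by left; exists q1.
  case: oq2 H => [q2|] H; first by right; exists q2.
  by case: H.
case: c => [[[[oq1 oq2] p1] p2] o] /= ho _.
have [F1 F2] := freshp_ok p1 p2 hk.
set f := freshp p1 p2.
have HV1 : forall i, updV V f d (p1 i) = V (p1 i).
  by move=> i; rewrite /updV (negbTE (F1 i)).
have HV2 : forall i, updV V f d (p2 i) = V (p2 i).
  by move=> i; rewrite /updV (negbTE (F2 i)).
have hg1 : updV V f d f = d by rewrite /updV eqxx.
split.
- case=> l [Hl [u [c' [Hin [Hd Hr]]]]].
  have ho' := newo_ok f ho Hl.
  have hm1 : forall i, cmp_sem (l (p1 i)) d (V (p1 i)) := fun i => Hl (p1 i).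
  have hm2 : forall i, cmp_sem (l (p2 i)) d (V (p2 i)) := fun i => Hl (p2 i).
  move: Hin; rewrite /union_step /freshc /= -/f.
  case/List.in_app_iff.
  + case/List.in_flat_map => t1 [Ht1].
    case: ifP => // /and3P [/eqP e1 /eqP e2 /forallP T1] [] // [Eth Eu Ec].
    subst c' th u.
    have nn : Some (tr_dst t1) <> None \/ (None : option (srt_Q S2)) <> None by left.
    move: Hr => /IH /= => /(_ ho' nn).
    case=> [[q1' [[<-] Hr]]|[q2' [//]]].
    left; exists (tr_src t1); split => //.
    exists t1; split => //.
    exists (tr_dst t1), (fun i => updV V f d (newp t1 p1 f i)); split => //.
    apply/(sim (A1 t1 Ht1) hg1 HV1 hm1).
    by split=> //; split=> // i; apply/eqP.
  + case/List.in_flat_map => t2 [Ht2].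
    case: ifP => // /and3P [/eqP e1 /eqP e2 /forallP T2] [] // [Eth Eu Ec].
    subst c' th u.
    have nn : (None : option (srt_Q S1)) <> None \/ Some (tr_dst t2) <> None by right.
    move: Hr => /IH /= => /(_ ho' nn).
    case=> [[q1' [//]]|[q2' [[<-] Hr]]].
    right; exists (tr_src t2); split => //.
    exists t2; split => //.
    exists (tr_dst t2), (fun i => updV V f d (newp t2 p2 f i)); split => //.
    apply/(sim (A2 t2 Ht2) hg1 HV2 hm2).
    by split=> //; split=> // i; apply/eqP.
- have [l Hl] := ex_l V d.
  have ho' := newo_ok f ho Hl.
  have hm1 : forall i, cmp_sem (l (p1 i)) d (V (p1 i)) := fun i => Hl (p1 i).
  have hm2 : forall i, cmp_sem (l (p2 i)) d (V (p2 i)) := fun i => Hl (p2 i).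
  case=> [[q1 [E [t1 [Ht1 [q1' [R1' [En1 Hr1]]]]]]]|[q2 [E [t2 [Ht2 [q2' [R2' [En2 Hr2]]]]]]]]; subst.
  + case: ((sim (A1 t1 Ht1) hg1 HV1 hm1).1 En1) => e1 e2 e3 e4 [T1 ER1 Ed1]; subst.
    exists l; split => //.
    exists (newp t1 p1 f (tr_out t1)), (Some (tr_dst t1), None, newp t1 p1 f, p2, newo o f l).
    split; last split => //.
      rewrite /union_step /= -/f; apply/List.in_app_iff; left.
      apply/List.in_flat_map; exists t1; split => //.
      have -> : [forall i, tr_test t1 i == l (p1 i)] by apply/forallP => i; apply/eqP.
      by rewrite !eqxx; left.
    apply/IH => //=; [by left|left; exists (tr_dst t1); split => //].
    exact: (proj1 (runs_from_ext _ _ ER1) Hr1).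
  + case: ((sim (A2 t2 Ht2) hg1 HV2 hm2).1 En2) => e1 e2 e3 e4 [T2 ER2 Ed2]; subst.
    exists l; split => //.
    exists (newp t2 p2 f (tr_out t2)), (None, Some (tr_dst t2), p1, newp t2 p2 f, newo o f l).
    split; last split => //.
      rewrite /union_step /= -/f; apply/List.in_app_iff; right.
      apply/List.in_flat_map; exists t2; split => //.
      have -> : [forall i, tr_test t2 i == l (p2 i)] by apply/forallP => i; apply/eqP.
      by rewrite !eqxx; left.
    apply/IH => //=; [by right|right; exists (tr_dst t2); split => //].
    exact: (proj1 (runs_from_ext _ _ ER2) Hr2).
Qed.

Lemma init_ok (G : linear_group) k1 k2 (R1 : 'I_k1 -> G) (R2 : 'I_k2 -> G) :
  exists (p1 : {ffun 'I_k1 -> 'I_(k1 + k2).+1}) (p2 : {ffun 'I_k2 -> 'I_(k1 + k2).+1})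
         (V : 'I_(k1 + k2).+1 -> G) (o : {ffun 'I_(k1 + k2).+1 * 'I_(k1 + k2).+1 -> cmp}),
    [/\ forall i, V (p1 i) = R1 i, forall j, V (p2 j) = R2 j & ocorrect o V].
Proof.
pose p1 : {ffun 'I_k1 -> 'I_(k1 + k2).+1} := [ffun i : 'I_k1 => inord (nat_of_ord i)].
pose p2 : {ffun 'I_k2 -> 'I_(k1 + k2).+1} := [ffun j : 'I_k2 => inord (k1 + nat_of_ord j)].
have v1 : forall i, (p1 i : nat) = i.
  move=> i; rewrite ffunE inordK //; have := ltn_ord i; lia.
have v2 : forall j, (p2 j : nat) = k1 + j.
  move=> j; rewrite ffunE inordK //; have := ltn_ord j; lia.
have inj1 : forall i i', p1 i = p1 i' -> i = i'.
  by move=> a b e; apply: ord_inj; rewrite -(v1 a) -(v1 b) e.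
have inj2 : forall j j', p2 j = p2 j' -> j = j'.
  move=> a b e; apply: ord_inj; apply: (@addnI k1); by rewrite -(v2 a) -(v2 b) e.
have disj : forall i j, p1 i <> p2 j.
  move=> a b e; have := ltn_ord a; have := v1 a; have := v2 b; rewrite e; lia.
have HVex : forall s : 'I_(k1 + k2).+1, exists v : lg_D G,
    (forall i, p1 i = s -> v = R1 i) /\ (forall j, p2 j = s -> v = R2 j).
  move=> s.
  case: (classic (exists i, p1 i = s)) => [[i Hi]|N1].
    exists (R1 i); split=> [i' Hi'|j Hj]; first by rewrite (inj1 i' i) // Hi'.
    by case: (disj i j); rewrite Hi Hj.
  case: (classic (exists j, p2 j = s)) => [[j Hj]|N2].
    exists (R2 j); split=> [i Hi|j' Hj']; first by case: N1; exists i.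
    by rewrite (inj2 j' j) // Hj'.
  exists (lg_zero G); split=> [i Hi|j Hj]; [case: N1; exists i|case: N2; exists j] => //.
have [V HV] := fin_all_exists HVex.
have [o Ho] := fin_all_exists (fun ab : 'I_(k1 + k2).+1 * 'I_(k1 + k2).+1 => cmp_ex (V ab.1) (V ab.2)).
exists p1, p2, V, [ffun ab => o ab]; split.
- by move=> i; apply: (proj1 (HV _)).
- by move=> j; apply: (proj2 (HV _)).
- by move=> a b; rewrite ffunE; apply: (Ho (a, b)).
Qed.

Unset Implicit Arguments.

Theorem theorem3p19 (G : linear_group) (Sigma Gamma Theta : finType) :
  (forall S1 S2 : srt Sigma Gamma G, add_free S1 -> add_free S2 ->
     (exists S : srt Sigma Gamma G, add_free S /\
        forall w, semantics S w <-> (semantics S1 w \/ semantics S2 w)) /\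
     (exists S : srt Sigma Gamma G, add_free S /\
        forall w, semantics S w <-> (semantics S1 w /\ semantics S2 w))) /\
  (forall (S1 : srt Sigma Gamma G) (S2 : srt Gamma Theta G),
     add_free S1 -> add_free S2 ->
     exists S : srt Sigma Theta G, add_free S /\
        forall w, semantics S w <-> compose (semantics S1) (semantics S2) w).
Proof.
split.
- move=> S1 S2 A1 A2.
  have [p1 [p2 [V0 [o0 [H1 H2 Ho]]]]] := init_ok (@srt_R0 _ _ _ S1) (@srt_R0 _ _ _ S2).
  have hk : srt_k S1 + srt_k S2 <= srt_k S1 + srt_k S2 by [].
  split.
  + exists (build (Some (srt_q0 S1), Some (srt_q0 S2), p1, p2, o0) V0 (@freshc _ _ _ _ _)
             (@union_step _ _ _ S1 S2 (srt_k S1 + srt_k S2))).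
    split; first exact: build_add_free.
    move=> w; rewrite /semantics build_runs.
    rewrite (union_sim A1 A2 hk) //=; last by left.
    rewrite /uR; split.
    * case=> [[q1 [[<-] Hr]]|[q2 [[<-] Hr]]]; [left|right].
        exact: (proj1 (runs_from_ext _ _ H1) Hr).
      exact: (proj1 (runs_from_ext _ _ H2) Hr).
    * case=> Hr; [left; exists (srt_q0 S1)|right; exists (srt_q0 S2)]; split => //.
        by apply: (proj2 (runs_from_ext _ _ H1)).
      by apply: (proj2 (runs_from_ext _ _ H2)).
  + exists (build (srt_q0 S1, srt_q0 S2, p1, p2, o0) V0 (@freshc _ _ _ _ _)
             (@inter_step _ _ _ S1 S2 (srt_k S1 + srt_k S2))).
    split; first exact: build_add_free.
    move=> w; rewrite /semantics build_runs.
    rewrite (inter_sim A1 A2 hk) //=.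
    split; case=> h1 h2; split.
    * exact: (proj1 (runs_from_ext _ _ H1) h1).
    * exact: (proj1 (runs_from_ext _ _ H2) h2).
    * exact: (proj2 (runs_from_ext _ _ H1) h1).
    * exact: (proj2 (runs_from_ext _ _ H2) h2).
- move=> S1 S2 A1 A2.
  have [p1 [p2 [V0 [o0 [H1 H2 Ho]]]]] := init_ok (@srt_R0 _ _ _ S1) (@srt_R0 _ _ _ S2).
  have hk : srt_k S1 + srt_k S2 <= srt_k S1 + srt_k S2 by [].
  exists (build (srt_q0 S1, srt_q0 S2, p1, p2, o0) V0 (@freshc _ _ _ _ _)
             (@comp_step _ _ _ _ S1 S2 (srt_k S1 + srt_k S2))).
  split; first exact: build_add_free.
  move=> w; rewrite /semantics build_runs.
  rewrite (comp_sim A1 A2 hk) //=.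
  split.
  + exact: compR_ext.
  + apply: compR_ext => i; by rewrite ?H1 ?H2.
Qed.
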